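(* Let $p>3$ be a prime. Then for each $k=1,2,\ldots,(p-1)/2$, $$\sum_{j=0}^{p-2k}\binom{-k}{k+j}\frac{(-1)^{k+j}}{\binom{k+j}{k}}\equiv\frac{3k}{2}\sum_{j=1}^k\frac{\binom{2j}{j}}{j}-\frac32\binom{2k}{k}\pmod p.$$
   Context: For an integer $x$ and $n\in\mathbb{N}$, $\binom{x}{n}=x(x-1)\cdots(x-n+1)/n!$ (so $\binom{-k}{n}=(-1)^n\binom{k+n-1}{n}$). Congruences between rational numbers are understood in the ring of rationals whose denominators are coprime to $p$. *)

(* Defs.v *)
From mathcomp Require Import all_boot all_order all_algebra.
Set Implicit Arguments. Unset Strict Implicit. Unset Printing Implicit Defensive.
Import Order.TTheory GRing.Theory Num.Theory.
Local Open Scope ring_scope.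

Definition binomz (x : int) (n : nat) : rat :=
  (\prod_(i < n) ((x - (i : nat)%:Z)%:~R : rat)) / (n`!)%:R.

Definition p_integral (p : nat) (q : rat) : bool :=
  coprime `|denq q|%N p.

(* Congruence modulo p in the ring Z_(p) of rationals whose denominators
   are coprime to p: both sides lie in Z_(p) and their difference is
   p times an element of Z_(p). *)
Definition rat_congr (p : nat) (a b : rat) : Prop :=
  [/\ p_integral p a, p_integral p b & p_integral p ((a - b) / p%:R)].

(* Main.v *)
Require Import Defs.
From mathcomp Require Import all_boot all_order all_algebra.
From mathcomp Require Import zify ring lra.
Import Order.TTheory GRing.Theory Num.Theory.
Local Open Scope ring_scope.

Lemma pintP p q : (1 < p)%N ->
  p_integral p q <-> exists (n : int) (d : nat), coprime d p /\ q = n%:~R / d%:R.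
Proof.
move=> p1; split.
  rewrite /p_integral => H; exists (numq q), `|denq q|%N; split => //.
  rewrite -[in LHS](divq_num_den q); congr (_ / _).
  by rewrite -[in LHS]absz_denq.
case=> n [d [cd ->]].
rewrite /p_integral.
have -> : (d%:R : rat) = (d%:Z)%:~R by [].
have : coprime `|d%:Z| p by [].
move: (d%:Z) => D {cd}.
case: divqP => [d0 | k x k0].
  by rewrite /coprime gcd0n => /eqP pe; rewrite pe in p1.
move=> cd; apply: coprime_dvdl cd.
rewrite abszM; apply: dvdn_mull; exact: dvdnn.
Qed.



Lemma cop_neq0 (p : nat) (p1 : (1 < p)%N) d : coprime d p -> (d%:R : rat) != 0.
Proof.
rewrite pnatr_eq0; case: d => // ; rewrite /coprime gcd0n => /eqP pe.
by rewrite pe in p1.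
Qed.

Lemma pintD (p : nat) (p1 : (1 < p)%N) x y : p_integral p x -> p_integral p y -> p_integral p (x + y).
Proof.
move=> /(pintP _ _ p1) [n1 [d1 [c1 ->]]] /(pintP _ _ p1) [n2 [d2 [c2 ->]]].
apply/(pintP _ _ p1); exists (n1 * d2%:Z + n2 * d1%:Z), (d1 * d2)%N; split.
  by rewrite coprimeMl c1 c2.

rewrite intrD !intrM natrM /=; field; by rewrite (cop_neq0 _ p1 _ c1) (cop_neq0 _ p1 _ c2).
Qed.

Lemma pintM (p : nat) (p1 : (1 < p)%N) x y : p_integral p x -> p_integral p y -> p_integral p (x * y).
Proof.
move=> /(pintP _ _ p1) [n1 [d1 [c1 ->]]] /(pintP _ _ p1) [n2 [d2 [c2 ->]]].
apply/(pintP _ _ p1); exists (n1 * n2), (d1 * d2)%N; split.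
  by rewrite coprimeMl c1 c2.

rewrite !intrM natrM /=; field; by rewrite (cop_neq0 _ p1 _ c1) (cop_neq0 _ p1 _ c2).
Qed.

Lemma pint_int (p : nat) (p1 : (1 < p)%N) (n : int) : p_integral p n%:~R.
Proof.
apply/(pintP _ _ p1); exists n, 1%N; split; first exact: coprime1n.
by rewrite divr1.
Qed.

Lemma pint_nat (p : nat) (p1 : (1 < p)%N) (n : nat) : p_integral p n%:R.
Proof. exact: (pint_int _ p1 n). Qed.

Lemma pintN (p : nat) (p1 : (1 < p)%N) x : p_integral p x -> p_integral p (- x).
Proof.
move=> h; rewrite -mulN1r; apply: pintM => //.
exact: (pint_int _ p1 (-1)).
Qed.

Lemma pintB (p : nat) (p1 : (1 < p)%N) x y : p_integral p x -> p_integral p y -> p_integral p (x - y).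
Proof. by move=> hx hy; apply: pintD => //; apply: pintN. Qed.

Lemma pintV (p : nat) (p1 : (1 < p)%N) (d : nat) : coprime d p -> p_integral p (d%:R^-1).
Proof.
move=> cd; apply/(pintP _ _ p1); exists 1, d; split => //.
by rewrite div1r.
Qed.

Lemma pint_sum (p : nat) (p1 : (1 < p)%N) (I : Type) (r : seq I) (P : pred I) (F : I -> rat) :
  (forall i, P i -> p_integral p (F i)) -> p_integral p (\sum_(i <- r | P i) F i).
Proof.
move=> h; apply: (big_ind (p_integral p)) => //; first exact: (pint_nat _ p1 0).
exact: pintD.
Qed.


Lemma cop_lt p n : prime p -> (0 < n < p)%N -> coprime n p.
Proof.
move=> pp /andP [n0 np]; rewrite coprime_sym prime_coprime //.
by rewrite gtnNdvd.
Qed.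

Lemma cop_fact p n : prime p -> (n < p)%N -> coprime n`! p.
Proof.
move=> pp; elim: n => [|n IH] np; first exact: coprime1n.
rewrite factS coprimeMl IH ?(ltnW np) // andbT.
apply: cop_lt => //; by rewrite np.
Qed.

Definition fr (n : nat) : rat := (n`!)%:R.
Definition E (k m : nat) : rat := fr (m + k - 1) * fr (m - k) / fr m ^+ 2.
Definition Y (k m : nat) : rat := fr (m + k - 1) * fr (m - k - 1) / fr (m - 1) ^+ 2.

Lemma fr_neq0 n : fr n != 0.
Proof. by rewrite /fr pnatr_eq0 -lt0n fact_gt0. Qed.

Lemma frS n : fr n.+1 = n.+1%:R * fr n.
Proof. by rewrite /fr factS natrM. Qed.

Lemma prod_negk k' n :
  \prod_(i < n) (((- (k'.+1)%:Z) - (i : nat)%:Z)%:~R : rat) = (-1) ^+ n * fr (n + k') / fr k'.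
Proof.
elim: n => [|n IH].
  by rewrite big_ord0 expr0 mul1r add0n mulfV // fr_neq0.
rewrite big_ord_recr /= IH addSn frS exprS.
have -> : ((- (k'.+1)%:Z - n%:Z)%:~R : rat) = - (n + k').+1%:R.
  rewrite intrB intrN -[(k'.+1)%:~R]/(k'.+1%:R : rat) -[n%:~R]/(n%:R : rat) -addnS natrD; ring.
have := fr_neq0 k'. move=> h. field. done.
Qed.

Lemma term_eq k j : (0 < k)%N ->
  binomz (- (k%:Z)) (k + j) * (-1) ^+ (k + j) / ('C(k + j, k))%:R = k%:R * E k (k + j).
Proof.
case: k => // k' _.
rewrite /binomz prod_negk /E.
have hb := bin_fact (leq_addr j k'.+1); rewrite addKn in hb.
have -> : (k'.+1 + j - k'.+1 = j)%N by lia.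
have -> : (k'.+1 + j + k'.+1 - 1 = k'.+1 + j + k')%N by lia.
have hC : ('C(k'.+1 + j, k'.+1))%:R = fr (k'.+1 + j) / (fr k'.+1 * fr j).
  have hbq : ('C(k'.+1 + j, k'.+1))%:R * (fr k'.+1 * fr j) = fr (k'.+1 + j).
    by rewrite /fr -hb !natrM.
  rewrite -hbq; field; by rewrite !pnatr_eq0 -!lt0n !fact_gt0.
rewrite hC -/(fr (k'.+1 + j)) frS.
have := fr_neq0 k'; have := fr_neq0 j; have := fr_neq0 (k'.+1 + j).
move=> h1 h2 h3.
rewrite -signr_odd; case: (odd _); rewrite ?expr0 ?expr1; field; by rewrite [1 + _]addrC natr1 !pnatr_eq0 -!lt0n !fact_gt0.
Qed.

Lemma pos_nz (x : rat) : 0 < x -> x != 0.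
Proof. by move=> h; rewrite gt_eqF. Qed.

Lemma natr_nz n : ((n.+1)%:R : rat) != 0.
Proof. by rewrite pnatr_eq0. Qed.

Lemma EY_step k t : (0 < k)%N ->
  E k.+1 (k + t.+1) - E k (k + t.+1) = - (2 / k%:R) * (Y k (k + t.+2) - Y k (k + t.+1)).
Proof.
case: k => // k _.
rewrite /E /Y.
have -> : (k.+1 + t.+1 - k.+1 - 1 = t)%N by lia.
have -> : (k.+1 + t.+1 + k.+2 - 1 = (k.+1 + k.+1 + t).+1)%N by lia.
have -> : (k.+1 + t.+1 - k.+2 = t)%N by lia.
have -> : (k.+1 + t.+1 + k.+1 - 1 = k.+1 + k.+1 + t)%N by lia.
have -> : (k.+1 + t.+1 - k.+1 = t.+1)%N by lia.
have -> : (k.+1 + t.+2 + k.+1 - 1 = (k.+1 + k.+1 + t).+1)%N by lia.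
have -> : (k.+1 + t.+2 - k.+1 - 1 = t.+1)%N by lia.
have -> : (k.+1 + t.+2 - 1 = (k.+1 + t).+1)%N by lia.
have -> : (k.+1 + t.+1 - 1 = k.+1 + t)%N by lia.
have -> : (k.+1 + t.+1 = (k.+1 + t).+1)%N by lia.
rewrite (frS (k.+1 + k.+1 + t)) (frS (k.+1 + t)) (frS t).
have := fr_neq0 t; have := fr_neq0 (k.+1 + t); have := fr_neq0 (k.+1 + k.+1 + t).
move=> h1 h2 h3.

have hk : (0:rat) <= k%:R := ler0n _ k.
have ht : (0:rat) <= t%:R := ler0n _ t.
field.
rewrite h2 /=; apply/andP; split; apply: pos_nz; lra.
Qed.

Definition L (p k : nat) : rat := \sum_(j < (p - 2 * k).+1) E k (k + j).

Lemma L_step p k N : (0 < k)%N -> p = (k + k + N.+2)%N ->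
  L p k.+1 - L p k = (2 / k%:R) * Y k k.+1 - E k k
     - ((2 / k%:R) * Y k (k + N.+2) + E k (k + N.+2)).
Proof.
move=> k0 ->; rewrite /L.
have -> : (k + k + N.+2 - 2 * k.+1 = N)%N by lia.
have -> : (k + k + N.+2 - 2 * k = N.+2)%N by lia.
rewrite [X in _ - X]big_ord_recr /= [X in _ - (X + _)]big_ord_recl /= addn0.
have -> : \sum_(i < N.+1) E k.+1 (k.+1 + i) =
   \sum_(i < N.+1) (E k (k + bump 0 i) + - (2 / k%:R) * (Y k (k + i.+2) - Y k (k + i.+1))).
  apply: eq_bigr => i _; rewrite -EY_step // /bump /= add1n addSnnS; ring.
rewrite big_split /= -mulr_sumr.
have -> : \sum_(i < N.+1) (Y k (k + i.+2) - Y k (k + i.+1)) = Y k (k + N.+2) - Y k (k + 1).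
  rewrite -(big_mkord xpredT (fun i => Y k (k + i.+2) - Y k (k + i.+1))).
  by rewrite (telescope_sumr (fun i => Y k (k + i.+1))).
rewrite addn1 /bump /=.
ring.
Qed.

Definition Zb (k s : nat) : rat :=
  fr (k + k + s) * fr s * (k + s.*2 + 2)%:R / (fr (k + s) ^+ 2 * k%:R * (k + s.+1)%:R ^+ 2).

Lemma bnd k s : (0 < k)%N ->
  (2 / k%:R) * Y k (k + s.+1) + E k (k + s.+1) = (k + k + s.+1)%:R * Zb k s.
Proof.
case: k => // k _.
rewrite /Y /E /Zb.
have -> : (k.+1 + s.+1 + k.+1 - 1 = k.+1 + k.+1 + s)%N by lia.
have -> : (k.+1 + s.+1 - k.+1 - 1 = s)%N by lia.
have -> : (k.+1 + s.+1 - 1 = k.+1 + s)%N by lia.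
have -> : (k.+1 + s.+1 - k.+1 = s.+1)%N by lia.
have -> : (k.+1 + s.+1 = (k.+1 + s).+1)%N by lia.
rewrite (frS s) (frS (k.+1 + s)).
have := fr_neq0 s; have := fr_neq0 (k.+1 + s); have := fr_neq0 (k.+1 + k.+1 + s).
move=> h1 h2 h3.
have hk : (0:rat) <= k%:R := ler0n _ k.
have hs : (0:rat) <= s%:R := ler0n _ s.
rewrite -muln2 !natrD natrM -addSnnS.
field.
by rewrite h2 andbT; apply/andP; split; apply: pos_nz; lra.
Qed.

Lemma base_terms k : (0 < k)%N ->
  (2 / k%:R) * Y k k.+1 - E k k = 3%:R / 2 / k%:R * ('C(2 * k, k))%:R.
Proof.
case: k => // k _.
rewrite /Y /E.
have hb := bin_fact (leq_addr k.+1 k.+1); rewrite addKn in hb.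
have hbq : ('C(k.+1 + k.+1, k.+1))%:R * (fr k.+1 * fr k.+1) = fr (k.+1 + k.+1).
  by rewrite /fr -hb !natrM.
have -> : (2 * k.+1 = k.+1 + k.+1)%N by lia.
have -> : (k.+2 + k.+1 - 1 = (k.+1 + k).+1)%N by lia.
have -> : (k.+2 - k.+1 - 1 = 0)%N by lia.
have -> : (k.+2 - 1 = k.+1)%N by lia.
have -> : (k.+1 + k.+1 - 1 = k.+1 + k)%N by lia.
have -> : (k.+1 - k.+1 = 0)%N by lia.
have e : (k.+1 + k.+1 = (k.+1 + k).+1)%N by lia.
rewrite e in hbq.
have hC : ('C((k.+1 + k).+1, k.+1))%:R = fr (k.+1 + k).+1 / (fr k.+1 * fr k.+1).
  rewrite -hbq; field; by rewrite !pnatr_eq0 -!lt0n !fact_gt0.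
rewrite e hC (frS (k.+1 + k)).
have := fr_neq0 k; have := fr_neq0 (k.+1 + k).
move=> h1 h2.
have hk : (0:rat) <= k%:R := ler0n _ k.
have f0 : fr 0 = 1 by [].
rewrite f0 (frS k).
field.
by rewrite h2 /=; apply: pos_nz; lra.
Qed.

Definition Rk (k : nat) : rat :=
  (3 * k)%:R / 2 * (\sum_(1 <= j < k.+1) ('C(2 * j, j))%:R / j%:R)
       - 3%:R / 2 * ('C(2 * k, k))%:R.

Lemma R_step k : (0 < k)%N ->
  Rk k.+1 / k.+1%:R - Rk k / k%:R = 3%:R / 2 / k%:R * ('C(2 * k, k))%:R.
Proof.
case: k => // k _.
rewrite /Rk big_nat_recr //=.
set S := \sum_(1 <= j < k.+2) _.
rewrite !natrM.
have hk : (0:rat) <= k%:R := ler0n _ k.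
field.
by apply/andP; split; apply: pos_nz; lra.
Qed.

Lemma pint_Zb p k s : prime p -> (0 < k)%N -> p = (k + k + s.+1)%N ->
  p_integral p (Zb k s).
Proof.
move=> pp k0 ep.
have p1 : (1 < p)%N by apply: prime_gt1.
rewrite /Zb; apply: pintM => //.
  apply: pintM => //; last exact: pint_nat.
  apply: pintM => //; exact: pint_nat.
rewrite /fr -!natrX -!natrM; apply: pintV => //.
rewrite !coprimeMl; apply/andP; split; first (apply/andP; split).
- rewrite andbb; apply: cop_fact => //; lia.
- apply: cop_lt => //; lia.
- rewrite andbb; apply: cop_lt => //; lia.
Qed.

Lemma E1 j : E 1 (1 + j) = (j.+1%:R)^-1.
Proof.
rewrite /E.
have -> : (1 + j + 1 - 1 = j.+1)%N by lia.
have -> : (1 + j - 1 = j)%N by lia.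
rewrite add1n frS.
have := fr_neq0 j => h.
field.
have hj : (0:rat) <= j%:R := ler0n _ j.
rewrite h andbT; apply: pos_nz; lra.
Qed.

Lemma base_L p : prime p -> (2 < p)%N ->
  exists w, p_integral p w /\ L p 1 = Rk 1 / 1%:R + p%:R * w.
Proof.
move=> pp p2.
have p1 : (1 < p)%N by apply: prime_gt1.
set n := (p - 2).+1.
have hn : n = (p - 1)%N by rewrite /n; lia.
exists (2%:R^-1 * \sum_(j < n) (j.+1%:R * (p - j.+1)%:R)^-1).
split.
  apply: pintM => //.
    apply: pintV => //; apply: cop_lt => //; lia.
  apply: pint_sum => // j _; rewrite -natrM; apply: pintV => //.
  rewrite coprimeMl; apply/andP; split; apply: cop_lt => //.
    by rewrite ltn0Sn /=; have := ltn_ord j; lia.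
  have := ltn_ord j; lia.
have -> : Rk 1 / 1%:R = 0.
  by rewrite /Rk big_nat1 /=; field.
rewrite add0r /L.
have -> : (p - 2 * 1).+1 = n by [].
under eq_bigr do rewrite E1.
set H := \sum_(j < n) _.
have H2 : H = \sum_(j < n) ((p - j.+1)%:R)^-1.
  rewrite /H (reindex_inj rev_ord_inj) /=.
  apply: eq_bigr => j _; congr (_ ^-1); congr (_ %:R).
  have := ltn_ord j; lia.
have -> : H = 2%:R^-1 * (H + H) by field.
rewrite {2}H2 /H -big_split /= !mulr_sumr.
apply: eq_bigr => j _.
have hj := ltn_ord j.
have hpj : (j.+1 <= p)%N by lia.
rewrite natrB //.
have hnz : (p%:R - j.+1%:R : rat) != 0.
  by rewrite -natrB // pnatr_eq0; lia.
field.
have e1 : (1 + j%:R : rat) = j.+1%:R by rewrite -natr1 addrC.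
have hj0 : (0:rat) <= j%:R := ler0n _ j.
rewrite e1 hnz /=; apply: pos_nz; lra.
Qed.

Lemma main_ind p : prime p -> forall k, (0 < k)%N -> (2 * k < p)%N ->
  exists w, p_integral p w /\ L p k = Rk k / k%:R + p%:R * w.
Proof.
move=> pp; have p1 : (1 < p)%N by apply: prime_gt1.
elim => [//|k IH] _ hk.
case: (posnP k) => [k0|kpos].
  by subst k; apply: base_L => //; lia.
have [w [pw ew]] := IH kpos ltac:(lia).
set N := (p - (k + k).+2)%N.
have ep : p = (k + k + N.+2)%N by rewrite /N; lia.
have hs := L_step _ _ _ kpos ep.
rewrite bnd // base_terms // in hs.
exists (w - Zb k N.+1); split.
  apply: pintB => //; apply: (pint_Zb _ _ _ pp kpos); lia.
have hR := R_step _ kpos.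
have -> : L p k.+1 = L p k + (L p k.+1 - L p k) by ring.
rewrite hs ew.
have -> : Rk k.+1 / k.+1%:R = Rk k / k%:R + (Rk k.+1 / k.+1%:R - Rk k / k%:R) by ring.
rewrite hR -ep.
ring.
Qed.

Theorem lemma2p4 (p k : nat) :
  prime p -> (3 < p)%N -> (1 <= k <= (p - 1) %/ 2)%N ->
  rat_congr p
    (\sum_(0 <= j < (p - 2 * k).+1)
        binomz (- (k%:Z)) (k + j) * (-1) ^+ (k + j) / ('C(k + j, k))%:R)
    ((3 * k)%:R / 2 * (\sum_(1 <= j < k.+1) ('C(2 * j, j))%:R / j%:R)
       - 3%:R / 2 * ('C(2 * k, k))%:R).
Proof.
move=> pp p3 /andP [k1 kp].
have p1 : (1 < p)%N by apply: prime_gt1.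
have k0 : (0 < k)%N by [].
have h2k : (2 * k < p)%N.
  have := leq_trunc_div (p - 1) 2; have := ltn_pmod (p - 1) (isT : (0 < 2)%N).
  have := divn_eq (p - 1) 2; lia.
have -> : \sum_(0 <= j < (p - 2 * k).+1)
        binomz (- (k%:Z)) (k + j) * (-1) ^+ (k + j) / ('C(k + j, k))%:R
        = k%:R * L p k.
  rewrite big_mkord /L mulr_sumr; apply: eq_bigr => j _; exact: term_eq.
rewrite -/(Rk k).
have [w [pw ew]] := main_ind _ pp _ k0 h2k.
have hRk : p_integral p (Rk k).
  rewrite /Rk; apply: pintB => //.
    apply: pintM => //.
      apply: pintM => //; first exact: pint_nat.
      apply: pintV => //; apply: cop_lt => //; lia.
    rewrite big_nat_cond; apply: pint_sum => // j /andP [/andP [j1 jk] _].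
    apply: pintM => //; first exact: pint_nat.
    apply: pintV => //; apply: cop_lt => //; lia.
  apply: pintM => //; last exact: pint_nat.
  apply: pintM => //; first exact: pint_nat.
  apply: pintV => //; apply: cop_lt => //; lia.
have hkL : k%:R * L p k = Rk k + p%:R * (k%:R * w).
  rewrite ew; have : (k%:R : rat) != 0 by rewrite pnatr_eq0 -lt0n.
  move=> hk; field; exact: hk.
have hp : (p%:R : rat) != 0 by rewrite pnatr_eq0; lia.
split => //.
- rewrite hkL; apply: pintD => //; apply: pintM => //; first exact: pint_nat.
  apply: pintM => //; exact: pint_nat.
- rewrite hkL (_ : Rk k + p%:R * (k%:R * w) - Rk k = p%:R * (k%:R * w)); last by ring.
  rewrite (_ : p%:R * (k%:R * w) / p%:R = k%:R * w); last by field.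
  apply: pintM => //; exact: pint_nat.
Qed.
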